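(* The identity functor of $\mathrm{Gaunt}_n$ has exactly one natural endo-transformation, namely the identity transformation: if $\eta\colon\mathrm{id}\Rightarrow\mathrm{id}$ is a natural transformation of endofunctors of $\mathrm{Gaunt}_n$, then $\eta_X=\mathrm{id}_X$ for every gaunt $n$-category $X$.
   Context: A strict $0$-category is a set; a strict $n$-category is a category enriched in strict $(n-1)$-categories. A strict $n$-category is gaunt if for every $1\le k\le n$ its only invertible $k$-morphisms are identities; $\mathrm{Gaunt}_n$ is the category of small gaunt $n$-categories and strict functors. *)

(* Defs.v *)
(* Strict n-categories, defined recursively by enrichment, as in the paper:
   a strict 0-category is a set (a Type); a strict (n+1)-category is a
   category enriched in strict n-categories.  Since the enrichment requires
   the notions of (bi)functor between strict n-categories, we build, by
   recursion on n, a record [Level] packaging for strict n-categories: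
   - the type of strict n-categories,
   - their k-cells (k-morphisms) for every k (cells of dimension > n are
     identity cells),
   - strict bifunctors A x B -> C and their action on cells,
   - strict functors A -> B and their action on cells,
   - identity cells,
   - gauntness.
   Equalities of (bi)functors (used in the enriched-category and functor
   axioms) are written out elementwise on cells of every dimension: a strict
   functor is determined by its action on cells. *)

Record Level := {
  cat : Type;
  cells : cat -> nat -> Type;
  bif : cat -> cat -> cat -> Type;
  bapp : forall A B C, bif A B C -> forall k, cells A k -> cells B k -> cells C k;
  fn : cat -> cat -> Type;
  fapp : forall A B, fn A B -> forall k, cells A k -> cells B k;
  idc : forall A k, cells A k -> cells A (S k);
  gaunt : cat -> Prop
}.

Arguments bapp {l A B C}.
Arguments fapp {l A B}.
Arguments idc {l A}.

Fixpoint iterid (L : Level) (H : cat L) (a : cells L H 0) (k : nat) : cells L H k :=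
  match k with
  | 0 => a
  | S j => idc j (iterid L H a j)
  end.
Arguments iterid {L H}.

Definition L0 : Level := {|
  cat := Type;
  cells := fun X _ => X;
  bif := fun A B C => A -> B -> C;
  bapp := fun A B C f _ a b => f a b;
  fn := fun A B => A -> B;
  fapp := fun A B f _ a => f a;
  idc := fun A _ a => a;
  gaunt := fun _ => True
|}.

Section Succ.
Variable L : Level.

Record SCat := {
  obj : Type;
  hom : obj -> obj -> cat L;
  comp : forall x y z, bif L (hom y z) (hom x y) (hom x z);
  ident : forall x, cells L (hom x x) 0;
  comp_assoc : forall w x y z k (h : cells L (hom y z) k) (g : cells L (hom x y) k)
      (f : cells L (hom w x) k),
      bapp (comp w x z) k (bapp (comp x y z) k h g) f
      = bapp (comp w y z) k h (bapp (comp w x y) k g f);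
  comp_lunit : forall x y k (f : cells L (hom x y) k),
      bapp (comp x y y) k (iterid (ident y) k) f = f;
  comp_runit : forall x y k (f : cells L (hom x y) k),
      bapp (comp x x y) k f (iterid (ident x) k) = f
}.

Definition scells (C : SCat) (k : nat) : Type :=
  match k with
  | 0 => obj C
  | S j => { x : obj C & { y : obj C & cells L (hom C x y) j } }
  end.

Record SBif (A B C : SCat) := {
  bo : obj A -> obj B -> obj C;
  bh : forall a a' b b', bif L (hom A a a') (hom B b b') (hom C (bo a b) (bo a' b'));
  bh_comp : forall a a' a'' b b' b'' k
      (f2 : cells L (hom A a' a'') k) (f1 : cells L (hom A a a') k)
      (g2 : cells L (hom B b' b'') k) (g1 : cells L (hom B b b') k),
      bapp (bh a a'' b b'') k (bapp (comp A a a' a'') k f2 f1) (bapp (comp B b b' b'') k g2 g1)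
      = bapp (comp C _ _ _) k (bapp (bh a' a'' b' b'') k f2 g2) (bapp (bh a a' b b') k f1 g1);
  bh_id : forall a b, bapp (bh a a b b) 0 (ident A a) (ident B b) = ident C (bo a b)
}.

Arguments bo {A B C}.
Arguments bh {A B C}.

Definition sbapp (A B C : SCat) (F : SBif A B C) (k : nat) :
    scells A k -> scells B k -> scells C k :=
  match k return scells A k -> scells B k -> scells C k with
  | 0 => fun a b => bo F a b
  | S j => fun u v =>
      existT _ (bo F (projT1 u) (projT1 v))
        (existT _ (bo F (projT1 (projT2 u)) (projT1 (projT2 v)))
           (bapp (bh F _ _ _ _) j (projT2 (projT2 u)) (projT2 (projT2 v))))
  end.

Record SFun (A B : SCat) := {
  fo : obj A -> obj B;
  fh : forall x y, fn L (hom A x y) (hom B (fo x) (fo y));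
  fh_comp : forall x y z k (g : cells L (hom A y z) k) (f : cells L (hom A x y) k),
      fapp (fh x z) k (bapp (comp A x y z) k g f)
      = bapp (comp B _ _ _) k (fapp (fh y z) k g) (fapp (fh x y) k f);
  fh_id : forall x, fapp (fh x x) 0 (ident A x) = ident B (fo x)
}.

Arguments fo {A B}.
Arguments fh {A B}.

Definition sfapp (A B : SCat) (F : SFun A B) (k : nat) : scells A k -> scells B k :=
  match k return scells A k -> scells B k with
  | 0 => fun a => fo F a
  | S j => fun u =>
      existT _ (fo F (projT1 u))
        (existT _ (fo F (projT1 (projT2 u))) (fapp (fh F _ _) j (projT2 (projT2 u))))
  end.

Definition sidc (C : SCat) (k : nat) : scells C k -> scells C (S k) :=
  match k return scells C k -> scells C (S k) with
  | 0 => fun x => existT _ x (existT _ x (ident C x))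
  | S j => fun u =>
      existT _ (projT1 u) (existT _ (projT1 (projT2 u)) (idc j (projT2 (projT2 u))))
  end.

Definition invertible1 (C : SCat) (x y : obj C) (f : cells L (hom C x y) 0) : Prop :=
  exists g : cells L (hom C y x) 0,
    bapp (comp C x y x) 0 g f = ident C x /\ bapp (comp C y x y) 0 f g = ident C y.

Arguments invertible1 {C x y}.

(* Gaunt: invertible 1-morphisms are identities, and (recursively) each
   hom-category is gaunt, i.e. invertible k-morphisms (k >= 2), which are the
   invertible (k-1)-morphisms of the hom-categories, are identities. *)
Definition sgaunt (C : SCat) : Prop :=
  (forall (x y : obj C) (f : cells L (hom C x y) 0),
      invertible1 f ->
      (existT _ x (existT _ y f) : scells C 1) = sidc C 0 x)
  /\ (forall x y : obj C, gaunt L (hom C x y)).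

Definition succ : Level := {|
  cat := SCat;
  cells := scells;
  bif := SBif;
  bapp := sbapp;
  fn := SFun;
  fapp := sfapp;
  idc := sidc;
  gaunt := sgaunt
|}.

End Succ.

Fixpoint level (n : nat) : Level :=
  match n with
  | 0 => L0
  | S m => succ (level m)
  end.

Definition nCat (n : nat) : Type := cat (level n).
Definition nCells {n : nat} (X : nCat n) (k : nat) : Type := cells (level n) X k.
Definition nFun {n : nat} (X Y : nCat n) : Type := fn (level n) X Y.
Definition nfapp {n : nat} {X Y : nCat n} (F : nFun X Y) (k : nat) :
  nCells X k -> nCells Y k := @fapp (level n) X Y F k.
Definition is_gaunt {n : nat} (X : nCat n) : Prop := gaunt (level n) X.

Definition GauntCat (n : nat) : Type := { X : nCat n | is_gaunt X }.

(* Main.v *)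
Require Import Defs.
From Stdlib Require Import Eqdep_dec Bool.

Record TPack (L : Level) := {
  tC : cat L;
  tb : bif L tC tC tC;
  tobj : cells L tC 0;
  tsub : forall k (a b : cells L tC k), a = b;
  tgaunt : gaunt L tC }.
Arguments tC {L}. Arguments tb {L}. Arguments tobj {L}. Arguments tsub {L}. Arguments tgaunt {L}.

Record Kit (L : Level) := {
  kP : TPack L;
  kE : cat L;
  kEe : forall k, cells L kE k -> False;
  kEg : gaunt L kE;
  ke1 : forall B C, bif L kE B C;
  ke2 : forall B C, bif L B kE C;
  kef : forall B, fn L kE B;
  kp1 : forall A, {F : bif L A (tC kP) A | forall k f g, bapp F k f g = f};
  kp2 : forall A, {F : bif L (tC kP) A A | forall k f g, bapp F k f g = g};
  kid : forall A, {F : fn L A A | forall k c, fapp F k c = c};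
  kpt : forall A (a : cells L A 0), {F : fn L (tC kP) A | forall k t, fapp F k t = iterid a k} }.
Arguments kP {L}. Arguments kE {L}. Arguments kEe {L}. Arguments kEg {L}.
Arguments ke1 {L}. Arguments ke2 {L}. Arguments kef {L}. Arguments kp1 {L}.
Arguments kp2 {L}. Arguments kid {L}. Arguments kpt {L}.

Lemma iterid0 (C : cat L0) (a : cells L0 C 0) k : @iterid L0 C a k = a.
Proof. induction k; simpl; auto. Qed.

Definition kit0 : Kit L0.
Proof.
  refine {| kP := @Build_TPack L0 (unit : Type) (fun _ _ => tt : unit) tt _ I;
            kE := (Empty_set : Type); kEg := I |}.
  - simpl. intros k [].
  - simpl. intros B C [].
  - simpl. intros B C _ [].
  - simpl. intros B [].
  - intros A. exists (fun a _ => a). reflexivity.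
  - intros A. exists (fun _ a => a). reflexivity.
  - intros A. exists (fun a => a). reflexivity.
  - intros A a. exists (fun _ => a). intros k t. simpl. symmetry; apply iterid0.
Unshelve. simpl. intros _ [] []. reflexivity. Defined.

Lemma iterid_succ (L : Level) (C : SCat L) (x : obj L C) j :
  @iterid (succ L) C x (S j) = existT _ x (existT _ x (iterid (ident L C x) j)).
Proof.
  induction j.
  - reflexivity.
  - change (@iterid (succ L) C x (S (S j))) with
      (sidc L C (S j) (@iterid (succ L) C x (S j))).
    rewrite IHj. reflexivity.
Qed.

Definition TS (L : Level) (P : TPack L) : SCat L.
Proof.
  refine {| obj := unit; hom := fun _ _ => tC P; comp := fun _ _ _ => tb P;
            ident := fun _ => tobj P |}; intros; apply tsub.
Defined.

Definition TPS (L : Level) (P : TPack L) : TPack (succ L).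
Proof.
  refine {| tC := TS L P : cat (succ L); tobj := (tt : cells (succ L) (TS L P) 0) |}.
  - refine (@Build_SBif L (TS L P) (TS L P) (TS L P) (fun _ _ => tt) (fun _ _ _ _ => tb P) _ _); intros; apply tsub.
  - intros [|k] a b; simpl in *.
    + destruct a, b; reflexivity.
    + destruct a as [[] [[] a]], b as [[] [[] b]]. rewrite (tsub P k a b). reflexivity.
  - split.
    + intros x y f _. destruct x, y. simpl. rewrite (tsub P 0 f (tobj P)). reflexivity.
    + intros x y. apply tgaunt.
Defined.

Definition ES (L : Level) : SCat L.
Proof.
  refine {| obj := Empty_set; hom := fun x _ => match x with end;
            comp := fun x _ _ => match x with end; ident := fun x => match x with end |};
  intros; match goal with x : Empty_set |- _ => destruct x end.
Defined.

Definition KitS (L : Level) (K : Kit L) : Kit (succ L).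
Proof.
  refine {| kP := TPS L (kP K); kE := ES L : cat (succ L) |}.
  - intros [|k] c; simpl in c; [destruct c | destruct c as [[] _]].
  - split; intros [].
  - intros B C. unshelve econstructor; simpl; intros;
      match goal with x : Empty_set |- _ => destruct x end.
  - intros B C. unshelve econstructor; simpl; intros;
      match goal with x : Empty_set |- _ => destruct x end.
  - intros B. unshelve econstructor; simpl; intros;
      match goal with x : Empty_set |- _ => destruct x end.
  - intros A.
    unshelve refine (exist _ (@Build_SBif L A (TS L (kP K)) A (fun a _ => a) (fun a a' _ _ => proj1_sig (kp1 K (hom L A a a'))) _ _) _).
    + intros. simpl. rewrite !(proj2_sig (kp1 K _)). reflexivity.
    + intros. simpl. rewrite !(proj2_sig (kp1 K _)). reflexivity.
    + intros [|k] f g; [reflexivity|]. destruct f as [x [y f]]. simpl.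
      rewrite (proj2_sig (kp1 K _)). reflexivity.
  - intros A.
    unshelve refine (exist _ (@Build_SBif L (TS L (kP K)) A A (fun _ a => a) (fun _ _ a a' => proj1_sig (kp2 K (hom L A a a'))) _ _) _).
    + intros. simpl. rewrite !(proj2_sig (kp2 K _)). reflexivity.
    + intros. simpl. rewrite !(proj2_sig (kp2 K _)). reflexivity.
    + intros [|k] f g; [reflexivity|]. destruct g as [x [y g]]. simpl.
      rewrite (proj2_sig (kp2 K _)). reflexivity.
  - intros A.
    unshelve refine (exist _ (@Build_SFun L A A (fun a => a) (fun a a' => proj1_sig (kid K (hom L A a a'))) _ _) _).
    + intros. simpl. rewrite !(proj2_sig (kid K _)). reflexivity.
    + intros. simpl. rewrite !(proj2_sig (kid K _)). reflexivity.
    + intros [|k] c; [reflexivity|]. destruct c as [x [y c]]. simpl.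
      rewrite (proj2_sig (kid K _)). reflexivity.
  - intros A x.
    unshelve refine (exist _ (@Build_SFun L (TS L (kP K)) A (fun _ => x) (fun _ _ => proj1_sig (kpt K (hom L A x x) (ident L A x))) _ _) _).
    + intros. simpl. rewrite !(proj2_sig (kpt K _ _)). symmetry. apply comp_lunit.
    + intros. simpl. rewrite !(proj2_sig (kpt K _ _)). reflexivity.
    + intros [|k] t; [reflexivity|]. simpl.
      rewrite (proj2_sig (kpt K _ _)). symmetry. apply iterid_succ.
Defined.

Fixpoint kit (n : nat) : Kit (level n) :=
  match n return Kit (level n) with
  | 0 => kit0
  | S m => KitS (level m) (kit m)
  end.

Definition shom (L : Level) (K : Kit L) (A : cat L) (x y : bool) : cat L :=
  match x, y with
  | true, true => tC (kP K)
  | true, false => A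
  | false, true => kE K
  | false, false => tC (kP K)
  end.

Definition scomp (L : Level) (K : Kit L) (A : cat L) (x y z : bool) :
  bif L (shom L K A y z) (shom L K A x y) (shom L K A x z) :=
  match x, y, z return bif L (shom L K A y z) (shom L K A x y) (shom L K A x z) with
  | true, true, true => tb (kP K)
  | true, true, false => proj1_sig (kp1 K A)
  | true, false, true => ke1 K _ _
  | true, false, false => proj1_sig (kp2 K A)
  | false, true, true => ke2 K _ _
  | false, true, false => ke2 K _ _
  | false, false, true => ke1 K _ _
  | false, false, false => tb (kP K)
  end.

Definition sident (L : Level) (K : Kit L) (A : cat L) (x : bool) : cells L (shom L K A x x) 0 :=
  match x with true => tobj (kP K) | false => tobj (kP K) end.

Ltac kill K :=
  try solve [exfalso; match goal with H : _ |- _ => exact (kEe K _ H) end].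

Definition Susp (L : Level) (K : Kit L) (A : cat L) : SCat L.
Proof.
  refine (@Build_SCat L bool (shom L K A) (scomp L K A) (sident L K A) _ _ _).
  - intros w x y z k h g f; destruct w, x, y, z; kill K; simpl in *;
      first [apply tsub | rewrite ?(proj2_sig (kp1 K A)), ?(proj2_sig (kp2 K A)); reflexivity].
  - intros x y k f; destruct x, y; kill K; simpl in *;
      first [apply tsub | rewrite ?(proj2_sig (kp1 K A)), ?(proj2_sig (kp2 K A)); reflexivity].
  - intros x y k f; destruct x, y; kill K; simpl in *;
      first [apply tsub | rewrite ?(proj2_sig (kp1 K A)), ?(proj2_sig (kp2 K A)); reflexivity].
Defined.

Lemma Susp_gaunt (L : Level) (K : Kit L) (A : cat L) : gaunt L A -> sgaunt L (Susp L K A).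
Proof.
  intros HA. split.
  - intros x y f Hf. destruct x, y.
    + simpl in f |- *. rewrite (tsub (kP K) 0 f (tobj (kP K))). reflexivity.
    + exfalso. destruct Hf as [g _]. exact (kEe K 0 g).
    + exfalso. exact (kEe K 0 f).
    + simpl in f |- *. rewrite (tsub (kP K) 0 f (tobj (kP K))). reflexivity.
  - intros x y; destruct x, y; simpl; [apply tgaunt | exact HA | apply kEg | apply tgaunt].
Qed.

Definition sfh (L : Level) (K : Kit L) (A B : cat L) (F : fn L A B) (x y : bool) :
  fn L (shom L K A x y) (shom L K B x y) :=
  match x, y return fn L (shom L K A x y) (shom L K B x y) with
  | true, true => proj1_sig (kid K _)
  | true, false => F
  | false, true => kef K _
  | false, false => proj1_sig (kid K _)
  end.

Definition SuspF (L : Level) (K : Kit L) (A B : cat L) (F : fn L A B) :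
  SFun L (Susp L K A) (Susp L K B).
Proof.
  refine (@Build_SFun L (Susp L K A) (Susp L K B) (fun b => b) (sfh L K A B F) _ _).
  - intros x y z k g f; destruct x, y, z; kill K; simpl in *;
      first [apply tsub | rewrite ?(proj2_sig (kp1 K _)), ?(proj2_sig (kp2 K _)),
                               ?(proj2_sig (kid K _)); reflexivity].
  - intros x; destruct x; apply tsub.
Defined.

Definition gfo (L : Level) (X : SCat L) (x y : obj L X) (b : bool) : obj L X :=
  if b then x else y.

Definition gfh (L : Level) (K : Kit L) (X : SCat L) (x y : obj L X) (b b' : bool) :
  fn L (shom L K (hom L X x y) b b') (hom L X (gfo L X x y b) (gfo L X x y b')) :=
  match b, b' return fn L (shom L K (hom L X x y) b b') (hom L X (gfo L X x y b) (gfo L X x y b')) with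
  | true, true => proj1_sig (kpt K _ (ident L X x))
  | true, false => proj1_sig (kid K _)
  | false, true => kef K _
  | false, false => proj1_sig (kpt K _ (ident L X y))
  end.

Definition Gf (L : Level) (K : Kit L) (X : SCat L) (x y : obj L X) :
  SFun L (Susp L K (hom L X x y)) X.
Proof.
  refine (@Build_SFun L (Susp L K (hom L X x y)) X (gfo L X x y) (gfh L K X x y) _ _).
  - intros a b c k g f; destruct a, b, c; kill K; simpl in *;
      rewrite ?(proj2_sig (kp1 K _)), ?(proj2_sig (kp2 K _)),
              ?(proj2_sig (kid K _)), ?(proj2_sig (kpt K _ _));
      first [symmetry; apply comp_lunit | symmetry; apply comp_runit].
  - intros a; destruct a; simpl; rewrite (proj2_sig (kpt K _ _)); reflexivity.
Defined.

Definition castF (L : Level) (C : SCat L) (D : cat L) (u' v' u v : obj L C)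
  (e1 : u' = u) (e2 : v' = v) (F : fn L D (hom L C u' v')) : fn L D (hom L C u v) :=
  match e1 in _ = u return fn L D (hom L C u v) with
  | eq_refl => match e2 in _ = v return fn L D (hom L C u' v) with eq_refl => F end
  end.

Lemma castF_spec (L : Level) (C : SCat L) (D : cat L) (u' v' u v : obj L C)
  (e1 : u' = u) (e2 : v' = v) (F : fn L D (hom L C u' v')) k (c : cells L D k) :
  existT (fun x => {y : obj L C & cells L (hom L C x y) k}) u' (existT _ v' (fapp F k c))
  = existT _ u (existT _ v (fapp (castF L C D u' v' u v e1 e2 F) k c)).
Proof. destruct e1, e2. reflexivity. Qed.

Lemma SuspF_cell (L : Level) (K : Kit L) (A B : cat L) (F : fn L A B) k (c : cells L A k) :
  sfapp L _ _ (SuspF L K A B F) (S k)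
    (existT (fun x => {y : bool & cells L (shom L K A x y) k}) true (existT _ false c))
  = existT (fun x => {y : bool & cells L (shom L K B x y) k}) true (existT _ false (fapp F k c)).
Proof. reflexivity. Qed.

Lemma Gf_cell (L : Level) (K : Kit L) (X : SCat L) (x y : obj L X) k (c : cells L (hom L X x y) k) :
  sfapp L _ _ (Gf L K X x y) (S k)
    (existT (fun a => {b : bool & cells L (shom L K (hom L X x y) a b) k}) true (existT _ false c))
  = existT (fun a => {b : obj L X & cells L (hom L X a b) k}) x (existT _ y c).
Proof. simpl. rewrite (proj2_sig (kid K _)). reflexivity. Qed.

Theorem lemma4p1 (n : nat)
    (eta : forall X : GauntCat n, nFun (proj1_sig X) (proj1_sig X))
    (eta_natural : forall (X Y : GauntCat n) (F : nFun (proj1_sig X) (proj1_sig Y))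
        (k : nat) (c : nCells (proj1_sig X) k),
        nfapp F k (nfapp (eta X) k c) = nfapp (eta Y) k (nfapp F k c)) :
  forall (X : GauntCat n) (k : nat) (c : nCells (proj1_sig X) k),
    nfapp (eta X) k c = c.
Proof.
  revert eta eta_natural. induction n as [|m IH]; intros eta eta_natural.
  - intros X k c.
    pose (Y := X).
    specialize (eta_natural X X (fun _ => c) k c). exact (eq_sym eta_natural).
  - set (L := level m). set (K := kit m).
    assert (objfix : forall (X : GauntCat (S m)) (x : obj L (proj1_sig X)),
               fo L _ _ (eta X) x = x).
    { intros X x.
      pose (T := exist (fun X : nCat (S m) => is_gaunt X) (tC (kP (kit (S m))))
                   (tgaunt (kP (kit (S m)))) : GauntCat (S m)).
      pose (F := proj1_sig (kpt (kit (S m)) (proj1_sig X) x) : nFun (proj1_sig T) (proj1_sig X)).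
      specialize (eta_natural T X F 0 tt). exact (eq_sym eta_natural). }
    pose (Sg := fun A : GauntCat m =>
           exist (fun X : nCat (S m) => is_gaunt X) (Susp L K (proj1_sig A))
              (Susp_gaunt L K (proj1_sig A) (proj2_sig A)) : GauntCat (S m)).
    pose (eta' := fun A : GauntCat m =>
       castF L (Susp L K (proj1_sig A)) (proj1_sig A) _ _ true false
         (objfix (Sg A) true) (objfix (Sg A) false) (fh L _ _ (eta (Sg A)) true false)
         : nFun (proj1_sig A) (proj1_sig A)).
    assert (key : forall (A : GauntCat m) k (c : nCells (proj1_sig A) k),
      sfapp L _ _ (eta (Sg A)) (S k)
        (existT (fun x => {y : bool & cells L (shom L K (proj1_sig A) x y) k}) true
           (existT _ false c))
      = existT _ true (existT _ false (fapp (eta' A) k c))).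
    { intros A k c. apply castF_spec. }
    assert (nat' : forall (A B : GauntCat m) (F : nFun (proj1_sig A) (proj1_sig B))
        (k : nat) (c : nCells (proj1_sig A) k),
        nfapp F k (nfapp (eta' A) k c) = nfapp (eta' B) k (nfapp F k c)).
    { intros A B F k c.
      pose (g := existT (fun x => {y : bool & cells L (shom L K (proj1_sig A) x y) k}) true
           (existT _ false c)).
      pose proof (eta_natural (Sg A) (Sg B) (SuspF L K _ _ F) (S k) g) as H.
      assert (H' : sfapp L _ _ (SuspF L K _ _ F) (S k) (sfapp L _ _ (eta (Sg A)) (S k) g)
                 = sfapp L _ _ (eta (Sg B)) (S k) (sfapp L _ _ (SuspF L K _ _ F) (S k) g))
        by exact H.
      clear H. unfold g in H'. rewrite key in H'. rewrite !SuspF_cell in H'.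
      rewrite key in H'.
      apply inj_pair2_eq_dec in H'; [|exact bool_dec].
      apply inj_pair2_eq_dec in H'; [|exact bool_dec].
      exact H'. }
    specialize (IH eta' nat').
    intros X [|j] c.
    + exact (objfix X c).
    + destruct c as [x [y c]].
      pose (A := exist (fun X : nCat m => is_gaunt X) (hom L (proj1_sig X) x y)
                   (proj2 (proj2_sig X) x y) : GauntCat m).
      pose (g := existT (fun x => {y : bool & cells L (shom L K (proj1_sig A) x y) j}) true
           (existT _ false c)).
      pose proof (eta_natural (Sg A) X (Gf L K (proj1_sig X) x y) (S j) g) as H.
      assert (H' : sfapp L _ _ (Gf L K (proj1_sig X) x y) (S j) (sfapp L _ _ (eta (Sg A)) (S j) g)
                 = sfapp L _ _ (eta X) (S j) (sfapp L _ _ (Gf L K (proj1_sig X) x y) (S j) g))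
        by exact H.
      clear H. unfold g in H'. rewrite key in H'.
      assert (IHc : fapp (eta' A) j c = c) by exact (IH A j c).
      rewrite IHc in H'. rewrite !Gf_cell in H'.
      exact (eq_sym H').
Qed.
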